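(* $\mathrm{PRT}\subset\mathrm{PRT[O]}\subseteq\mathrm{PRT[T,O]}$ and $\mathrm{PRT}\subset\mathrm{PRT[T]}\subseteq\mathrm{PRT[T,O]}$, where $\subset$ denotes proper inclusion.
   Context: An indexed family is a sequence $\mathcal F=(F_n)_{n\in\mathbb N}$ of subsets of $\mathbb N$ that is uniformly computably enumerable; a set may occur with several indices, and $F\in\mathcal F$ means $F=F_n$ for some $n$. The minimal index $\mathrm{mi}_{\mathcal F}(F)$ is the least $n$ with $F_n=F$. An enumeration of a nonempty set $A$ is an infinite sequence of elements of $A$ in which every element of $A$ occurs; $f\restriction n$ is its initial segment of length $n$, and $\mathrm{content}(\sigma)$ is the set of entries of a finite string $\sigma$. A learner is a partial computable function from finite strings of natural numbers to natural numbers (hypotheses); hypothesis $h$ is interpreted as $F_h$. $M$ converges to a correct index on an enumeration $f$ of $F$ if there is $i$ with $M(f\restriction j)=M(f\restriction i)$ for all $j\ge i$ and $F_{M(f\restriction i)}=F$. $\mathcal F$ is PRT-learnable if there are a learner $M$ and a polynomial $p$ such that for every $F\in\mathcal F$ and every enumeration $f$ of $F$, $M$ converges to a correct index on $f$ in fewer than $p(\mathrm{mi}_{\mathcal F}(F))$ computation steps; if an oracle is used, the number of oracle queries is also bounded by $p(\mathrm{mi}_{\mathcal F}(F))$. A teacher is a computable map $T$ from finite strings to finite strings such that $T(\sigma)$ is a prefix of $T(\tau)$ whenever $\sigma$ is a prefix of $\tau$, and $\mathrm{content}(T(\sigma))\subseteq\mathrm{content}(\sigma)$. $\mathcal F$ is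 PRT[O]-learnable if some learner with access to a membership oracle for the target set PRT-learns it; PRT[T]-learnable if there is a learner-teacher pair $(M,T)$ such that $M$, fed with $T(f\restriction n)$ in place of $f\restriction n$ (i.e. on $T\circ f$), meets the PRT criterion for every enumeration $f$ of every member of $\mathcal F$ (only the learner's computation is counted); PRT[T,O]-learnable if as for PRT[T] but $M$ additionally has a membership oracle for the target and $T$ has access to the oracle answers $M$ receives. PRT, PRT[O], PRT[T], PRT[T,O] denote the classes of indexed families learnable in these senses. *)

(* Defs.v *)
From mathcomp Require Import all_boot all_algebra.

Set Implicit Arguments.
Unset Strict Implicit.
Unset Printing Implicit Defensive.

(* Tape symbols are natural numbers, 0 is the blank.  Symbols 1 and 2 are the *)
(* binary digits 0 and 1, 3 is an item separator, 4 a field separator.        *)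

Inductive move := ML | MR | MS.

Inductive action :=
| Act of nat (* new state *) & nat (* written symbol *) & move
| Ask of nat (* state if yes *) & nat (* state if no *).

(* A machine is a FINITE transition table: rules ((state, read symbol), act).
   The first matching rule is used; if none matches the machine halts.
   The start state is 0. *)
Definition TM := seq ((nat * nat) * action).

Definition oracle_free (M : TM) : bool :=
  all (fun r => if r.2 is Act _ _ _ then true else false) M.

(* configuration: state, left part of tape (reversed), scanned cell, right part *)
Record config := Config { cst : nat; cleft : seq nat; ccur : nat; cright : seq nat }.

Definition bitval (s : nat) : nat := if s == 2 then 1 else 0.
Definition isbit (s : nat) : bool := (s == 1) || (s == 2).

(* value of a binary word (most significant digit first) *)
Definition binval (w : seq nat) : nat := foldl (fun acc b => acc.*2 + bitval b) 0 w.

Definition head_bits (c : config) : seq nat :=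
  take (find (fun s => ~~ isbit s) (ccur c :: cright c)) (ccur c :: cright c).

Definition head_word (c : config) : seq nat :=
  take (find (fun s => s == 0) (ccur c :: cright c)) (ccur c :: cright c).

Definition do_move (d : move) (l : seq nat) (a : nat) (r : seq nat) : seq nat * nat * seq nat :=
  match d with
  | MS => (l, a, r)
  | MR => (a :: l, head 0 r, behead r)
  | ML => (behead l, head 0 l, a :: r)
  end.

Definition step (M : TM) (o : nat -> bool) (c : config) : option (config * option nat) :=
  match [seq r <- M | (r.1.1 == cst c) && (r.1.2 == ccur c)] with
  | [::] => None
  | r :: _ =>
    match r.2 with
    | Act q' s d =>
        let: (l, a, rr) := do_move d (cleft c) s (cright c) in
        Some (Config q' l a rr, None)
    | Ask qy qn =>
        let x := binval (head_bits c) in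
        Some (Config (if o x then qy else qn) (cleft c) (ccur c) (cright c), Some x)
    end
  end.

Fixpoint run (M : TM) (o : nat -> bool) (fuel : nat) (c : config)
  : option (nat * seq nat * config) :=
  match fuel with
  | 0 => None
  | k.+1 =>
    match step M o c with
    | None => Some (0, [::], c)
    | Some (c', oq) =>
      match run M o k c' with
      | None => None
      | Some (t, qs, cf) =>
          Some (t.+1, (if oq is Some x then [:: x] else [::]) ++ qs, cf)
      end
    end
  end.

Definition init (w : seq nat) : config := Config 0 [::] (head 0 w) (behead w).

Definition halts (M : TM) (o : nat -> bool) (w : seq nat) (t : nat) (qs : seq nat)
  (cf : config) : Prop :=
  exists fuel, run M o fuel (init w) = Some (t, qs, cf).

Definition out_nat (c : config) : nat := binval (head_bits c).

Fixpoint binF (fuel n : nat) : seq nat :=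
  match fuel with
  | 0 => [::]
  | k.+1 => if n == 0 then [::] else rcons (binF k n./2) (if odd n then 2 else 1)
  end.
(* binary digits of n, most significant first, no leading zeros (bin 0 = [::]) *)
Definition bin (n : nat) : seq nat := binF n n.

Definition enc (s : seq nat) : seq nat := flatten [seq rcons (bin a) 3 | a <- s].

(* encoding of (sigma, log of oracle answers) for teachers in PRT[T,O] *)
Definition enc_log (l : seq (nat * bool)) : seq nat :=
  enc (flatten [seq [:: x.1; nat_of_bool x.2] | x <- l]).
Definition enc2 (s : seq nat) (l : seq (nat * bool)) : seq nat :=
  enc s ++ 4 :: enc_log l.

Definition no_oracle : nat -> bool := fun _ => false.

Definition computable_str (T : seq nat -> seq nat) : Prop :=
  exists E : TM, oracle_free E /\
    forall s, exists t qs cf, halts E no_oracle (enc s) t qs cf /\ head_word cf = enc (T s).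

Definition computable_str2 (T : seq nat -> seq (nat * bool) -> seq nat) : Prop :=
  exists E : TM, oracle_free E /\
    forall s l, exists t qs cf, halts E no_oracle (enc2 s l) t qs cf /\
      head_word cf = enc (T s l).

(* indexed family: F n is the n-th set; uniformly c.e. means that
   {(n, x) | x \in F n} is semi-decided by a machine *)
Definition indexed_family (F : nat -> nat -> Prop) : Prop :=
  exists E : TM, oracle_free E /\
    forall n x, F n x <-> exists t qs cf, halts E no_oracle (enc [:: n; x]) t qs cf.

Definition same_set (A B : nat -> Prop) : Prop := forall x, A x <-> B x.

Definition is_mi (F : nat -> nat -> Prop) (A : nat -> Prop) (m : nat) : Prop :=
  same_set (F m) A /\ forall k, k < m -> ~ same_set (F k) A.

(* f is an enumeration of A (A is then nonempty) *)
Definition enumeration (A : nat -> Prop) (f : nat -> nat) : Prop :=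
  (forall k, A (f k)) /\ (forall x, A x -> exists k, f k = x).

Definition restr (f : nat -> nat) (n : nat) : seq nat := mkseq f n.

Definition content (s : seq nat) : nat -> Prop := fun x => x \in s.

Definition teacher (T : seq nat -> seq nat) : Prop :=
  computable_str T /\
  (forall s t, prefix s t -> prefix (T s) (T t)) /\
  (forall s x, content (T s) x -> content s x).

Definition teacher_O (T : seq nat -> seq (nat * bool) -> seq nat) : Prop :=
  computable_str2 T /\
  (forall s t l l', prefix s t -> prefix l l' -> prefix (T s l) (T t l')) /\
  (forall s l x, content (T s l) x -> content s x).

Definition peval (p : {poly nat}) (m : nat) : nat := p.[m]%R.

(* The learner, run on the inputs g 0, g 1, ..., has the runs
   (ts j steps, queries qss j, output ys j); it converges to a correct index
   for A in fewer than p(m) computation steps and oracle queries (counted in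
   total over the runs on g 0, ..., g i, i the convergence point). *)
Definition converges_within (F : nat -> nat -> Prop) (A : nat -> Prop)
  (p : {poly nat}) (m : nat) (ts : nat -> nat) (qss : nat -> seq nat)
  (ys : nat -> nat) : Prop :=
  exists i, (forall j, i <= j -> ys j = ys i) /\ same_set (F (ys i)) A /\
    \sum_(j < i.+1) ts j < peval p m /\
    \sum_(j < i.+1) size (qss j) < peval p m.

Definition is_oracle (A : nat -> Prop) (o : nat -> bool) : Prop :=
  forall x, o x = true <-> A x.

(* the generic learning criterion: g n is computed from the enumeration
   prefix and the oracle answers the learner got on g 0, ..., g (n-1) *)
Definition learns_with (F : nat -> nat -> Prop) (M : TM) (p : {poly nat})
  (G : seq nat -> seq (nat * bool) -> seq nat) : Prop :=
  forall n m, is_mi F (F n) m ->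
  forall f, enumeration (F n) f ->
  forall o, is_oracle (F n) o ->
  exists (g : nat -> seq nat) (ts : nat -> nat) (qss : nat -> seq nat)
         (cfs : nat -> config),
    (forall j, halts M o (enc (g j)) (ts j) (qss j) (cfs j) /\
       g j = G (restr f j)
               (flatten [seq [seq (x, o x) | x <- qss k] | k <- iota 0 j])) /\
    converges_within F (F n) p m ts qss (fun j => out_nat (cfs j)).

Definition PRT (F : nat -> nat -> Prop) : Prop :=
  exists (M : TM) (p : {poly nat}), oracle_free M /\
    learns_with F M p (fun s _ => s).

Definition PRT_O (F : nat -> nat -> Prop) : Prop :=
  exists (M : TM) (p : {poly nat}), learns_with F M p (fun s _ => s).

Definition PRT_T (F : nat -> nat -> Prop) : Prop :=
  exists (M : TM) (T : seq nat -> seq nat) (p : {poly nat}),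
    oracle_free M /\ teacher T /\ learns_with F M p (fun s _ => T s).

Definition PRT_TO (F : nat -> nat -> Prop) : Prop :=
  exists (M : TM) (T : seq nat -> seq (nat * bool) -> seq nat) (p : {poly nat}),
    teacher_O T /\ learns_with F M p T.

(* Main.v *)
Require Import Defs.
From mathcomp Require Import all_boot all_algebra zify.
Set Implicit Arguments.
Unset Strict Implicit.
Unset Printing Implicit Defensive.

Definition hf (M : TM) o c t qs cf := exists fuel, run M o fuel c = Some (t, qs, cf).

Inductive reach (M : TM) o : config -> config -> Prop :=
| rch0 c : reach M o c c
| rch1 c c' c'' : step M o c = Some (c', None) -> reach M o c' c'' -> reach M o c c''.

Lemma reach_trans M o a b c : reach M o a b -> reach M o b c -> reach M o a c.
Proof. elim=> // x y z H _ IH Hc; apply: rch1 H (IH Hc). Qed.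

Lemma reach1 M o c c' : step M o c = Some (c', None) -> reach M o c c'.
Proof. by move=> H; apply: rch1 H (rch0 _ _ _). Qed.

Lemma hf_halt M o c : step M o c = None -> hf M o c 0 [::] c.
Proof. by move=> H; exists 1; rewrite /= H. Qed.

Lemma reach_hf M o c c' t qs cf : reach M o c c' -> hf M o c' t qs cf ->
  exists t', hf M o c t' qs cf.
Proof.
elim=> [x H|x y z Hs _ IH H]; first by exists t.
have [t' [f Hf]] := IH H; exists t'.+1, f.+1; by rewrite /= Hs Hf.
Qed.

Lemma reach_loop M o c c' : reach M o c c' -> (forall fuel, run M o fuel c' = None) ->
  forall fuel, run M o fuel c = None.
Proof.
elim=> // x y z Hs _ IH H [|f] //=; by rewrite Hs IH.
Qed.

Lemma run_det M o f1 f2 c r1 r2 : run M o f1 c = Some r1 -> run M o f2 c = Some r2 -> r1 = r2.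
Proof.
elim: f1 f2 c r1 r2 => [|f1 IH] [|f2] c r1 r2 //=.
case: (step M o c) => [[c' oq]|]; last by move=> [<-] [<-].
case E1: (run M o f1 c') => [[[t qs] cf]|] //.
case E2: (run M o f2 c') => [[[t' qs'] cf']|] //.
have [-> -> ->] : (t, qs, cf) = (t', qs', cf') by apply: IH E1 E2.
by move=> [<-] [<-].
Qed.

Lemma hf_det M o c t qs cf t' qs' cf' : hf M o c t qs cf -> hf M o c t' qs' cf' ->
  [/\ t = t', qs = qs' & cf = cf'].
Proof. move=> [f1 H1] [f2 H2]; by case: (run_det H1 H2) => -> -> ->. Qed.

Lemma hf_pos M o c t qs cf : step M o c <> None -> hf M o c t qs cf -> 0 < t.
Proof.
move=> Hs [[|f] //=].
case: (step M o c) Hs => [[c' oq]|] // _.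
by case: (run M o f c') => [[[? ?] ?]|] // [<-].
Qed.

Lemma all_filter_head (T : Type) (P q : pred T) (s : seq T) r rs :
  all P s -> filter q s = r :: rs -> P r.
Proof.
elim: s => //= x s IH /andP[Px Ps]; case: (q x) => [[<- _]//|]; exact: IH.
Qed.

Lemma step_of M o o' c : oracle_free M -> step M o c = step M o' c.
Proof.
move=> Hof; rewrite /step.
case E: [seq r <- M | _] => [|r rs] //.
have := all_filter_head Hof E; by case: r.2.
Qed.

Lemma run_of M o o' f c : oracle_free M -> run M o f c = run M o' f c.
Proof.
move=> Hof; elim: f c => [|f IH] c //=; rewrite (step_of o o' c Hof).
case: (step M o' c) => [[c' oq]|] //; by rewrite IH.
Qed.

Lemma hf_of M o o' c t qs cf : oracle_free M -> hf M o c t qs cf -> hf M o' c t qs cf.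
Proof. by move=> Hof [f H]; exists f; rewrite -(run_of o) . Qed.

Lemma reach_halt M o c c' : reach M o c c' -> step M o c' = None -> exists t, hf M o c t [::] c'.
Proof. move=> Hr Hs; exact: reach_hf Hr (hf_halt Hs). Qed.

Lemma binF_bits k n : all isbit (binF k n).
Proof.
elim: k n => [|k IH] n //=; case: (n == 0) => //.
by rewrite all_rcons IH andbT; case: (odd n).
Qed.

Lemma bin_bits n : all isbit (bin n).
Proof. exact: binF_bits. Qed.

Lemma binF_pos k n : n <= k -> 0 < n -> exists b, binF k n = 2 :: b.
Proof.
elim: k n => [|k IH] n; first by rewrite leqn0 => /eqP ->.
move=> Hn Hn0 /=; have -> : (n == 0) = false by case: n Hn0 {Hn}.
have Hh : n./2 <= k by rewrite leq_half_double; lia.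
case: (posnP n./2) => [H0|Hp].
  rewrite H0 /=.
  have -> : odd n by rewrite -[n]odd_double_half H0 /= in Hn0 *; case: (odd n) Hn0.
  by case: (k) => [|k']; exists [::].
have [b ->] := IH _ Hh Hp; by exists (rcons b (if odd n then 2 else 1)).
Qed.

Lemma bin0 : bin 0 = [::]. Proof. by []. Qed.
Lemma bin1 : bin 1 = [:: 2]. Proof. by []. Qed.

Lemma bin_pos n : 0 < n -> exists b, bin n = 2 :: b.
Proof. exact: binF_pos. Qed.

Lemma bin_ge2 n : 1 < n -> exists y b, bin n = 2 :: y :: b.
Proof.
move=> Hn; rewrite /bin; case: n Hn => [|n] // Hn /=.
have Hh : n.+1./2 <= n by rewrite leq_half_double; lia.
have [b ->] := binF_pos Hh (ltac:(by rewrite half_gt0)).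
by exists (head (if odd n.+1 then 2 else 1) b), (behead (rcons b (if odd n.+1 then 2 else 1))); case: b.
Qed.

Definition s123 (x : nat) : bool := (x == 1) || (x == 2) || (x == 3).

Lemma enc_s123 s : all s123 (enc s).
Proof.
elim: s => //= a s IH; rewrite all_cat IH andbT all_rcons /s123 /=.
apply/allP => x /(allP (bin_bits a)); rewrite /isbit => /orP[]->; by rewrite ?orbT.
Qed.

Lemma enc_cons a s : enc (a :: s) = rcons (bin a) 3 ++ enc s.
Proof. by []. Qed.

Definition hw (s : seq nat) := take (find (fun x => x == 0) s) s.

Lemma hw_eq s s' : (forall i, nth 0 s i = nth 0 s' i) -> hw s = hw s'.
Proof.
rewrite /hw; elim: s s' => [|x s IH] [|y s'] H //=.
- by have /= <- := H 0.
- by have /= -> := H 0.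
have /= Hxy := H 0; subst y; case: (x == 0) => //=.
congr cons; apply: IH => i; exact: (H i.+1).
Qed.

Definition shA a := match a with Act q s d => Act q.+3 s d | Ask y n => Ask y.+3 n.+3 end.
Definition shR (r : nat * nat * action) := ((r.1.1.+3, r.1.2), shA r.2).
Definition pre : TM :=
  [:: ((0,1),Act 0 1 MR); ((0,2),Act 0 2 MR); ((0,3),Act 0 3 MR); ((0,4),Act 0 4 MR);
      ((0,0),Act 1 0 ML);
      ((1,1),Act 1 0 ML); ((1,2),Act 1 0 ML); ((1,3),Act 1 0 ML); ((1,4),Act 2 0 ML);
      ((2,1),Act 2 1 ML); ((2,2),Act 2 2 ML); ((2,3),Act 2 3 ML); ((2,0),Act 3 0 MR)].
Definition comp (E : TM) : TM := pre ++ map shR E.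

Definition neq (l l' : seq nat) := forall i, nth 0 l i = nth 0 l' i.
Definition Rc d c := [/\ cst d = (cst c).+3, neq (cleft d) (cleft c), ccur d = ccur c
  & neq (cright d) (cright c)].

Lemma filter_comp E q a : [seq r <- comp E | (r.1.1 == q.+3) && (r.1.2 == a)] =
  map shR [seq r <- E | (r.1.1 == q) && (r.1.2 == a)].
Proof. by rewrite filter_cat /= filter_map. Qed.

Lemma do_move_neq mv l l' a r r' : neq l l' -> neq r r' ->
  match do_move mv l a r, do_move mv l' a r' with
  | (l1, a1, r1), (l2, a2, r2) => [/\ neq l1 l2, a1 = a2 & neq r1 r2] end.
Proof.
move=> Hl Hr; case: mv => /=.
- split; [by move=> i; rewrite !nth_behead | by rewrite -!nth0 | by case].
- split; [by case | by rewrite -!nth0 | by move=> i; rewrite !nth_behead].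
- by [].
Qed.

Lemma step_sim E o c d : oracle_free E -> Rc d c ->
  match step E o c with
  | None => step (comp E) o d = None
  | Some (c1, oq) => exists d1, step (comp E) o d = Some (d1, oq) /\ Rc d1 c1 end.
Proof.
move=> Hof; case: d => qd ld ad rd; case: c => qc lc ac rc [/= -> Hl -> Hr].
rewrite /step (filter_comp E qc ac) /=.
case E1: [seq r <- E | _] => [|r rs] //=.
have := all_filter_head Hof E1.
case: r {E1} => [[q0 s0] act] /=; case: act => // q' s' mv _ /=.
have := do_move_neq mv s' Hl Hr.
case: (do_move mv ld s' rd) => [[l1 a1] r1]; case: (do_move mv lc s' rc) => [[l2 a2] r2].
case=> H1 Ha H3; subst; eexists; split; first reflexivity; by split.
Qed.

Lemma run_sim E o f c d t qs cf : oracle_free E -> Rc d c -> run E o f c = Some (t, qs, cf) ->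
  exists cf', run (comp E) o f d = Some (t, qs, cf') /\ Rc cf' cf.
Proof.
move=> Hof; elim: f c d t qs cf => [|f IH] c d t qs cf HR //=.
have := step_sim o Hof HR.
case: (step E o c) => [[c1 oq]|].
- move=> [d1 [-> HR1]].
  case Er: (run E o f c1) => [[[t' qs'] cf1]|] // [<- <- <-].
  have [cf' [-> HR']] := IH _ _ _ _ _ HR1 Er; by exists cf'.
- by move=> -> [<- <- <-]; exists d.
Qed.

Definition s1234 (x : nat) : bool := (x == 1) || (x == 2) || (x == 3) || (x == 4).

Lemma phase0 E o p l x : all s1234 (x :: p) ->
  reach (comp E) o (Config 0 l x p) (Config 0 (catrev (x :: p) l) 0 [::]).
Proof.
elim: p l x => [|y p IH] l x /= /andP[Hx Hp].
- apply: reach1; move: Hx; rewrite /s1234.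
  by case: x => [|[|[|[|[|x]]]]].
- apply: rch1 (IH (x :: l) y Hp); move: Hx; rewrite /s1234.
  by case: x => [|[|[|[|[|x]]]]].
Qed.

Lemma nseq_cons0 k R : nseq k 0 ++ 0 :: R = nseq k.+1 0 ++ R.
Proof. by elim: k => //= k ->. Qed.

Lemma phase1 E o q y L R : s123 y -> all s123 q ->
  exists k, reach (comp E) o (Config 1 (q ++ 4 :: L) y R) (Config 1 L 4 (nseq k 0 ++ R)).
Proof.
elim: q y R => [|z q IH] y R Hy /=.
- move=> _; exists 1; apply: reach1; move: Hy; rewrite /s123.
  by case: y => [|[|[|[|y]]]].
- move=> /andP[Hz Hq]; have [k Hk] := IH z (0 :: R) Hz Hq.
  exists k.+1; rewrite -nseq_cons0; apply: rch1 Hk; move: Hy; rewrite /s123.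
  by case: y => [|[|[|[|y]]]].
Qed.

Lemma phase2 E o q y R : s123 y -> all s123 q ->
  reach (comp E) o (Config 2 q y R) (Config 2 [::] 0 (catrev q (y :: R))).
Proof.
elim: q y R => [|z q IH] y R Hy /=.
- move=> _; apply: reach1; move: Hy; rewrite /s123.
  by case: y => [|[|[|[|y]]]].
- move=> /andP[Hz Hq]; apply: rch1 (IH z (y :: R) Hz Hq); move: Hy; rewrite /s123.
  by case: y => [|[|[|[|y]]]].
Qed.

Lemma s123_1234 s : all s123 s -> all s1234 s.
Proof. by move=> /allP H; apply/allP => x /H; rewrite /s123 /s1234 => ->. Qed.

Lemma pre_reach E o u v : all s123 u -> all s123 v ->
  exists Z, all (fun x => x == 0) Z /\
    reach (comp E) o (init (u ++ 4 :: v))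
      (Config 3 [:: 0] (head 0 (u ++ Z)) (behead (u ++ Z))).
Proof.
move=> Hu Hv.
have H1 : exists Z1, all (fun x => x == 0) Z1 /\
    reach (comp E) o (init (u ++ 4 :: v)) (Config 1 (rev u) 4 Z1).
  have Hall : all s1234 (u ++ 4 :: v) by rewrite all_cat /= !s123_1234.
  case Ew: (u ++ 4 :: v) Hall => [|x p]; first by case: (u) Ew.
  move=> Hall; rewrite /init /=.
  have R0 := phase0 E o [::] Hall.
  have Erev : catrev (x :: p) [::] = rev v ++ 4 :: rev u.
    by rewrite catrevE cats0 -Ew rev_cat rev_cons cat_rcons.
  rewrite Erev in R0.
  have R1 : reach (comp E) o (Config 0 (rev v ++ 4 :: rev u) 0 [::])
      (Config 1 (behead (rev v ++ 4 :: rev u)) (head 0 (rev v ++ 4 :: rev u)) [:: 0]).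
    by apply: reach1.
  have R01 := reach_trans R0 R1.
  case Ev: (rev v) R01 => [|y q] R01.
    by exists [:: 0]; split.
  have Hrv : all s123 (y :: q) by rewrite -Ev all_rev.
  move: Hrv => /= /andP[Hy Hq].
  have [k Hk] := phase1 E o (rev u) [:: 0] Hy Hq.
  exists (nseq k 0 ++ [:: 0]); split; last exact: reach_trans R01 Hk.
  by rewrite all_cat all_nseq /= ?orbT.
case: H1 => Z1 [HZ1 R1].
have R2 : reach (comp E) o (Config 1 (rev u) 4 Z1)
    (Config 2 (behead (rev u)) (head 0 (rev u)) (0 :: Z1)) by apply: reach1.
have R12 := reach_trans R1 R2.
case Eu: (rev u) R12 => [|y q] R12.
  have Hu0 : u = [::] by rewrite -[u]revK Eu.
  rewrite Hu0 in R12 *.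
  exists (0 :: Z1); split; first by [].
  by apply: reach_trans R12 (reach1 _).
have Hru : all s123 (y :: q) by rewrite -Eu all_rev.
move: Hru => /= /andP[Hy Hq].
have R3 := phase2 E o (0 :: Z1) Hy Hq.
exists (0 :: Z1); split; first by [].
have -> : u ++ 0 :: Z1 = catrev q (y :: 0 :: Z1).
  by rewrite catrevE -[u]revK Eu rev_cons cat_rcons.
apply: reach_trans (reach_trans R12 R3) _.
by apply: reach1.
Qed.

Lemma nth_zeros Z i : all (fun x => x == 0) Z -> nth 0 Z i = 0.
Proof. elim: Z i => [|z Z IH] [|i] //= /andP[/eqP Hz H]; [by [] | exact: IH]. Qed.

Lemma neq_catZ u Z : all (fun x => x == 0) Z -> neq (u ++ Z) u.
Proof.
move=> HZ i; rewrite nth_cat; case: ltnP => // Hi.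
by rewrite nth_zeros // nth_default.
Qed.

Lemma head_word_hw c : head_word c = hw (ccur c :: cright c).
Proof. by []. Qed.

Lemma comp_computable (T : seq nat -> seq nat) :
  computable_str T -> computable_str2 (fun s _ => T s).
Proof.
case=> E [Hof HE]; exists (comp E); split.
  move: Hof; rewrite /oracle_free all_cat /=; elim: (E) => //= r E' IH /andP[Hr HE'].
  by rewrite IH // andbT; case: r.2 Hr.
move=> s l; have [t [qs [cf [[f Hf] Hcf]]]] := HE s.
have [Z [HZ Hr]] := pre_reach E no_oracle (enc_s123 s) (enc_s123
   (flatten [seq [:: x.1; nat_of_bool x.2] | x <- l])).
have HR : Rc (Config 3 [:: 0] (head 0 (enc s ++ Z)) (behead (enc s ++ Z))) (init (enc s)).
  split => //=.
  - by rewrite /neq => -[|i] //=; rewrite nth_nil.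
  - by rewrite -!nth0 (neq_catZ _ HZ).
  - by move=> i; rewrite !nth_behead (neq_catZ _ HZ).
have [cf' [Hf' [_ _ Hc Hr']]] := run_sim Hof HR Hf.
have [t' Ht'] := reach_hf Hr (ex_intro _ f Hf').
exists t', qs, cf'; split; first exact: Ht'.
rewrite head_word_hw -Hcf head_word_hw; apply: hw_eq; case=> [|i] //=.
Qed.

Lemma id_computable : computable_str (fun s => s).
Proof.
exists [::]; split => // s; exists 0, [::], (init (enc s)); split.
  by exists 1.
have := enc_s123 s; rewrite head_word_hw /init /hw.
case: (enc s) => [|x w] //= /andP[Hx Hw].
have -> : (x == 0) = false by move: Hx; rewrite /s123; case: x.
congr cons; rewrite -[X in _ = X]take_size; congr take.
apply: hasNfind; apply/hasPn => y /(allP Hw).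
by rewrite /s123; case: y.
Qed.

Definition fam (n x : nat) : bool := (x == 0) || (0 < n) && (x == 1).
Definition Fm : nat -> nat -> Prop := fun n x => fam n x.

Definition IE : TM :=
  [:: ((0,3),Act 1 3 MR); ((0,2),Act 2 2 MR); ((1,2),Act 9 5 MS);
      ((2,1),Act 2 1 MR); ((2,2),Act 2 2 MR); ((2,3),Act 3 3 MR);
      ((3,2),Act 4 2 MR); ((4,1),Act 9 5 MS); ((4,2),Act 9 5 MS); ((9,5),Act 9 5 MS)].

Lemma IE_loop o f l r : run IE o f (Config 9 l 5 r) = None.
Proof. elim: f => //= f IH; by rewrite IH. Qed.

Lemma reach_loop9 o c l r : reach IE o (c) (Config 9 l 5 r) -> forall f, run IE o f c = None.
Proof. move=> H; apply: (reach_loop H) => f; exact: IE_loop. Qed.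

Lemma IE_skip o b l X : all isbit b ->
  exists l', reach IE o (Config 2 l (head 0 (b ++ 3 :: X)) (behead (b ++ 3 :: X)))
    (Config 2 l' 3 X).
Proof.
elim: b l => [|y b IH] l /=; first by move=> _; exists l; apply: rch0.
move=> /andP[Hy Hb]; have [l' Hl'] := IH (y :: l) Hb.
exists l'; apply: rch1 Hl'; move: Hy; rewrite /isbit.
by case: y => [|[|[|y]]].
Qed.

Lemma not_halt M o c : (forall f, run M o f c = None) -> ~ exists t qs cf, hf M o c t qs cf.
Proof. by move=> H [t [qs [cf [f Hf]]]]; rewrite H in Hf. Qed.

Ltac st := eapply rch1; [reflexivity|].

Lemma IE_spec n x : Fm n x <-> exists t qs cf, halts IE no_oracle (enc [:: n; x]) t qs cf.
Proof.
rewrite /Fm /halts !enc_cons /= cats0.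
case: (posnP n) => [->|Hn].
- case: (posnP x) => [->|Hx].
  + split => // _.
    have Hr : reach IE no_oracle (init [:: 3; 3]) (Config 1 [:: 3] 3 [::]) by st; apply: rch0.
    have [t Ht] := reach_halt Hr (erefl _).
    by exists t, [::], (Config 1 [:: 3] 3 [::]).
  + have [b Eb] := bin_pos Hx; rewrite Eb /fam /= eqn0Ngt Hx /=; split => // H.
    exfalso; apply: (not_halt _ H); eapply reach_loop9.
    by st; st; apply: rch0.
- have [b Eb] := bin_pos Hn; rewrite Eb /=.
  have Hb : all isbit b by have := bin_bits n; rewrite Eb => /andP[].
  have Ei : init (2 :: rcons b 3 ++ rcons (bin x) 3) = Config 0 [::] 2 (b ++ 3 :: rcons (bin x) 3)
    by rewrite -cats1 -catA.
  rewrite Ei.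
  have [l' Hl'] := IE_skip no_oracle [:: 2] (rcons (bin x) 3) Hb.
  have R1 : reach IE no_oracle (Config 0 [::] 2 (b ++ 3 :: rcons (bin x) 3))
     (Config 3 (3 :: l') (head 0 (rcons (bin x) 3)) (behead (rcons (bin x) 3))).
    st; apply: reach_trans Hl' _; st; apply: rch0.
  move: R1; case: (posnP x) => [->|Hx] R1.
  + split => // _.
    have [t Ht] := reach_halt R1 (erefl _).
    by exists t, [::]; eexists; exact: Ht.
  clear Ei Hl'; case: (ltngtP x 1) => [|Hx1|Ex1].
  + by move=> Hx1; case: (x) Hx Hx1.
  + have [y [b' Eb']] := bin_ge2 Hx1.
    have Hy : isbit y by have := bin_bits x; rewrite Eb' => /and3P[].
    rewrite /fam; have -> : (x == 0) = false by case: (x) Hx1.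
    have -> : (x == 1) = false by case: (x) Hx1 => [|[|]].
    rewrite andbF /=; split => // H; exfalso; apply: (not_halt _ H); apply: (@reach_loop9 _ _ [:: 2, 3 & l'] (rcons b' 3)).
    apply: reach_trans R1 _; rewrite Eb' /=; st; move: Hy; rewrite /isbit.
    by case: y {Eb'} => [|[|[|y]]] //= _; st; apply: rch0.
  + rewrite Ex1 in R1 *; split => // _.
    have R2 : reach IE no_oracle (Config 3 (3 :: l') (head 0 (rcons (bin 1) 3))
       (behead (rcons (bin 1) 3))) (Config 4 [:: 2, 3 & l'] 3 [::]) by st; apply: rch0.
    have [t Ht] := reach_halt (reach_trans R1 R2) (erefl _).
    by exists t, [::]; eexists; exact: Ht.
  by rewrite /fam Hn.
Qed.

Lemma Fm_indexed : indexed_family Fm.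
Proof. exists IE; split => //; exact: IE_spec. Qed.

Lemma no01 : ~ same_set (Fm 0) (Fm 1).
Proof. by move=> /(_ 1) [_ H]; have := H isT. Qed.

Lemma Fm_pos n : 0 < n -> same_set (Fm 1) (Fm n).
Proof. by move=> Hn x; rewrite /Fm /fam Hn. Qed.

Lemma fam_le1 n x : fam n x -> x <= 1.
Proof. by rewrite /fam; case: x => [|[|x]] //; rewrite andbF. Qed.

Lemma head_enc_le3 s : head 0 (enc s) <= 3.
Proof.
have := enc_s123 s; case: (enc s) => [|x w] //= /andP[Hx _].
by move: Hx; rewrite /s123; case: x => [|[|[|[|x]]]].
Qed.

Definition OL : TM :=
  [:: ((0,0),Act 1 3 ML); ((0,1),Act 1 3 ML); ((0,2),Act 1 3 ML); ((0,3),Act 1 3 ML);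
      ((1,0), Act 2 2 MS); ((2,2), Ask 3 4); ((4,2), Act 5 3 MS)].

Definition OLcf (o : nat -> bool) (w : seq nat) :=
  if o 1 then Config 3 [::] 2 (3 :: behead w) else Config 5 [::] 3 (3 :: behead w).

Lemma OL_run o s : run OL o 5 (init (enc s)) =
  Some (if o 1 then 3 else 4, [:: 1], OLcf o (enc s)).
Proof.
rewrite /init /OLcf; have := head_enc_le3 s.
case: (head 0 (enc s)) => [|[|[|[|h]]]] // _; rewrite /= /head_bits /=; by case: (o 1).
Qed.

Lemma OL_out o w : out_nat (OLcf o w) = o 1.
Proof. by rewrite /OLcf; case: (o 1). Qed.

Lemma PRT_O_Fm : PRT_O Fm.
Proof.
exists OL, (polyC 5); move=> n m Hmi f Hf o Ho.
exists (fun j => restr f j), (fun _ => if o 1 then 3 else 4), (fun _ => [:: 1]),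
  (fun j => OLcf o (enc (restr f j))).
split.
  by move=> j; split => //; exists 5; rewrite OL_run.
exists 0; split; [|split; [|split]].
- by move=> j _; rewrite !OL_out.
- rewrite OL_out; have Eo : o 1 = fam n 1.
    by apply/idP/idP => [/Ho|/Ho ->].
  rewrite Eo /fam /=; case: (posnP n) => [->|Hn] //.
  rewrite ?Hn; exact: Fm_pos.
- by rewrite big_ord1 /peval hornerC; case: (o 1).
- by rewrite big_ord1 /peval hornerC.
Qed.

Fixpoint dz (s : seq nat) : seq nat :=
  if s is x :: s' then (if x == 0 then dz s' else s) else [::].

Lemma dz_cat s r : prefix (dz s) (dz (s ++ r)).
Proof.
elim: s => [|x s IH] /=; first by rewrite prefix0s.
case: (x == 0) => //; exact: prefix_prefix.
Qed.

Lemma dz_mem s x : x \in dz s -> x \in s.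
Proof.
elim: s => //= y s IH; case: (y == 0) => // /IH; by rewrite in_cons => ->; rewrite orbT.
Qed.

Lemma dz_shape s : dz s = [::] \/ exists a r, a != 0 /\ dz s = a :: r.
Proof.
elim: s => [|x s IH] /=; first by left.
case E: (x == 0) => //; right; exists x, s; by rewrite E.
Qed.

Definition DZM : TM := [:: ((0,3), Act 0 3 MR)].

Lemma dz_reach o s l : exists l',
  reach DZM o (Config 0 l (head 0 (enc s)) (behead (enc s)))
    (Config 0 l' (head 0 (enc (dz s))) (behead (enc (dz s)))).
Proof.
elim: s l => [|x s IH] l /=; first by exists l; apply: rch0.
case E: (x == 0); last by exists l; apply: rch0.
move/eqP: E => ->; have [l' H] := IH (3 :: l); exists l'.
by apply: rch1 H.
Qed.

Lemma hw_enc s : hw (head 0 (enc s) :: behead (enc s)) = enc s.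
Proof.
have := enc_s123 s; rewrite /hw.
case: (enc s) => [|x w] //= /andP[Hx Hw].
have -> : (x == 0) = false by move: Hx; rewrite /s123; case: x.
congr cons; rewrite -[X in _ = X]take_size; congr take.
apply: hasNfind; apply/hasPn => y /(allP Hw).
by rewrite /s123; case: y.
Qed.

Lemma dz_computable : computable_str dz.
Proof.
exists DZM; split => // s.
have [l' Hr] := dz_reach no_oracle s [::].
have Hs : step DZM no_oracle (Config 0 l' (head 0 (enc (dz s))) (behead (enc (dz s)))) = None.
  case: (dz_shape s) => [->|[a [r [Ha ->]]]] //.
  have [b Eb] := (@bin_pos a ltac:(by rewrite lt0n)).
  by rewrite enc_cons Eb.
have [t Ht] := reach_halt Hr Hs.
exists t, [::]; eexists; split; first exact: Ht.
by rewrite head_word_hw /= hw_enc.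
Qed.

Lemma dz_teacher : teacher dz.
Proof.
split; first exact: dz_computable.
split.
- by move=> s t /prefixP [r ->]; exact: dz_cat.
- by move=> s x; rewrite /content => /dz_mem.
Qed.

Lemma dz0 s : all (fun x => x == 0) s -> dz s = [::].
Proof. elim: s => //= x s IH /andP[-> H]; exact: IH. Qed.

Lemma dz1 s : all (fun x => x <= 1) s -> 1 \in s -> exists r, dz s = 1 :: r.
Proof.
elim: s => //= x s IH /andP[Hx Hs]; rewrite in_cons.
case: x Hx => [|[|x]] //= _.
- exact: IH.
- by move=> _; exists s.
Qed.

Lemma PRT_T_Fm : PRT_T Fm.
Proof.
exists [::], dz, (polyC 1); split => //; split; first exact: dz_teacher.
move=> n m Hmi f [Hf1 Hf2] o Ho.
exists (fun j => dz (restr f j)), (fun _ => 0), (fun _ => [::]),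
  (fun j => init (enc (dz (restr f j)))).
split; first by move=> j; split => //; exists 1.
have Hle : forall j, all (fun x => x <= 1) (restr f j).
  by move=> j; apply/allP => y /mapP [k _ ->]; exact: fam_le1 (Hf1 k).
have Hsum : forall i, \sum_(j < i.+1) (fun _ : nat => 0) j = 0 by move=> i; rewrite big1.
case: (posnP n) => [En|Hn].
- exists 0; rewrite !Hsum /peval hornerC; split; [|split => //].
  + move=> j _.
    have Hz : forall j, dz (restr f j) = [::].
      move=> j'; apply: dz0; apply/allP => y /mapP [k _ ->].
      by have := Hf1 k; rewrite /Fm /fam En ltnn andFb orbF.
    by rewrite !Hz.
  + have Hz : dz (restr f 0) = [::] by [].
    by rewrite Hz En.
- have [k Hk] := Hf2 1 ltac:(by rewrite /Fm /fam Hn).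
  have Hj : forall j, k < j -> out_nat (init (enc (dz (restr f j)))) = 1.
    move=> j Hkj; have [r ->] := dz1 (Hle j) (ltac:(apply/mapP; exists k; rewrite ?mem_iota //)).
    by [].
  exists k.+1; rewrite !Hsum /peval hornerC; split; [|split => //].
  + by move=> j Hkj; rewrite !Hj.
  + rewrite Hj //; exact: Fm_pos.
Qed.

Lemma sum_ge (ts : nat -> nat) i : (forall j, 0 < j -> 0 < ts j) ->
  i <= \sum_(j < i.+1) ts j.
Proof.
move=> H; rewrite -(big_mkord xpredT ts).
elim: i => // i IH; rewrite big_nat_recr //=.
have := H i.+1 isT; lia.
Qed.

Lemma init_restr (f : nat -> nat) j : f 0 = 0 ->
  init (enc (restr f j.+1)) = Config 0 [::] 3 (enc (map f (iota 1 j))).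
Proof. by move=> H; rewrite /restr /mkseq /= H. Qed.

Lemma not_PRT_Fm : ~ PRT Fm.
Proof.
move=> [M [p [Hof HL]]].
pose K := (peval p 0 + peval p 1).+1.
pose f0 := fun _ : nat => 0.
pose f1 := fun k => if k < K then 0 else 1.
have mi0 : is_mi Fm (Fm 0) 0 by split.
have mi1 : is_mi Fm (Fm 1) 1.
  split => // k; rewrite ltnS leqn0 => /eqP ->; exact: no01.
have en0 : enumeration (Fm 0) f0 by split => // x; rewrite /Fm /fam /= orbF => /eqP ->; exists 0.
have en1 : enumeration (Fm 1) f1.
  split; first by move=> k; rewrite /f1; case: (k < K).
  move=> x; rewrite /Fm /fam /= => /orP[/eqP ->|/eqP ->].
  - by exists 0; rewrite /f1.
  - by exists K; rewrite /f1 ltnn.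
have [g0 [ts0 [qss0 [cfs0 [Hr0 [i0 [Hc0 [Hs0 [Ht0 _]]]]]]]]] := HL 0 0 mi0 f0 en0 (fam 0) (fun x => iff_refl _).
have [g1 [ts1 [qss1 [cfs1 [Hr1 [i1 [Hc1 [Hs1 [Ht1 _]]]]]]]]] := HL 1 1 mi1 f1 en1 (fam 1) (fun x => iff_refl _).
have Hrun0 : forall j, hf M (fam 0) (init (enc (restr f0 j))) (ts0 j) (qss0 j) (cfs0 j).
  by move=> j; have [H E] := Hr0 j; rewrite E in H.
have Hrun1 : forall j, hf M (fam 1) (init (enc (restr f1 j))) (ts1 j) (qss1 j) (cfs1 j).
  by move=> j; have [H E] := Hr1 j; rewrite E in H.
have f10 : f1 0 = 0 by [].
have contra : forall y, same_set (Fm y) (Fm 0) -> same_set (Fm y) (Fm 1) -> False.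
  move=> y H0 H1; apply: no01 => x; split => H.
  - by apply/H1/H0.
  - by apply/H0/H1.
case Efilt: [seq r <- M | (r.1.1 == 0) && (r.1.2 == 3)] => [|r rs].
- have Hs : forall w, step M (fam 0) (Config 0 [::] 3 w) = None /\
      step M (fam 1) (Config 0 [::] 3 w) = None by move=> w; rewrite /step /= Efilt.
  have Hout0 : forall j, out_nat (cfs0 j.+1) = 0.
    move=> j; have := Hrun0 j.+1; rewrite init_restr // => H.
    have [_ _ ->] := hf_det H (hf_halt (Hs _).1); by [].
  have Hout1 : forall j, out_nat (cfs1 j.+1) = 0.
    move=> j; have := Hrun1 j.+1; rewrite init_restr // => H.
    have [_ _ ->] := hf_det H (hf_halt (Hs _).2); by [].
  apply: (contra 0).
  + move: Hs0; rewrite -(Hc0 (i0 + i1).+1) ?Hout0 //; lia.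
  + move: Hs1; rewrite -(Hc1 (i0 + i1).+1) ?Hout1 //; lia.
- have Hs : forall o w, step M o (Config 0 [::] 3 w) <> None.
    move=> o w; rewrite /step /= Efilt; case: r.2 => [q s d|qy qn] //=; by case: do_move => [[? ?] ?].
  have Hpos0 : forall j, 0 < j -> 0 < ts0 j.
    case=> // j _; have := Hrun0 j.+1; rewrite init_restr //; exact: hf_pos (Hs _ _).
  have Hpos1 : forall j, 0 < j -> 0 < ts1 j.
    case=> // j _; have := Hrun1 j.+1; rewrite init_restr //; exact: hf_pos (Hs _ _).
  have Hi0 := leq_ltn_trans (sum_ge i0 Hpos0) Ht0.
  have Hi1 := leq_ltn_trans (sum_ge i1 Hpos1) Ht1.
  pose j := maxn i0 i1.
  have HjK : j < K by rewrite /j /K; lia.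
  have Eres : restr f0 j = restr f1 j.
    rewrite /restr /mkseq; apply/eq_in_map => k; rewrite mem_iota add0n => /andP[_ Hk].
    by rewrite /f1 /f0 ifT //; apply: ltn_trans Hk HjK.
  have H0 := Hrun0 j; have H1 := Hrun1 j.
  rewrite Eres in H0; have H0' := hf_of (fam 1) Hof H0.
  have [_ _ Ecf] := hf_det H0' H1.
  apply: (contra (out_nat (cfs0 j))).
  + by rewrite (Hc0 j) // /j leq_maxl.
  + by rewrite Ecf (Hc1 j) // /j leq_maxr.
Qed.
Theorem proposition3p5 :
  (* PRT ⊂ PRT[O] (proper) *)
  ((forall F, indexed_family F -> PRT F -> PRT_O F) /\
   (exists F, indexed_family F /\ PRT_O F /\ ~ PRT F)) /\
  (* PRT[O] ⊆ PRT[T,O] *)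
  (forall F, indexed_family F -> PRT_O F -> PRT_TO F) /\
  (* PRT ⊂ PRT[T] (proper) *)
  ((forall F, indexed_family F -> PRT F -> PRT_T F) /\
   (exists F, indexed_family F /\ PRT_T F /\ ~ PRT F)) /\
  (* PRT[T] ⊆ PRT[T,O] *)
  (forall F, indexed_family F -> PRT_T F -> PRT_TO F).
Proof.
split; [split|split; [|split; [split|]]].
- by move=> F _ [M [p [_ H]]]; exists M, p.
- exists Fm; split; [exact: Fm_indexed | split; [exact: PRT_O_Fm | exact: not_PRT_Fm]].
- move=> F _ [M [p H]]; exists M, (fun s _ => s), p; split => //.
  split; first exact: (comp_computable id_computable).
  by split.
- move=> F _ [M [p [Hof H]]]; exists M, (fun s => s), p; split => //; split => //.
  split; first exact: id_computable.
  by split.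
- exists Fm; split; [exact: Fm_indexed | split; [exact: PRT_T_Fm | exact: not_PRT_Fm]].
- move=> F _ [M [T [p [_ [[HTc [HTp HTx]] H]]]]]; exists M, (fun s _ => T s), p; split => //.
  split; first exact: (comp_computable HTc).
  split; last by move=> s l x; exact: HTx.
  by move=> s t l l' Hst _; exact: HTp.
Qed.
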